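(* Let $\sigma=\mathbb{L}(p_1,q_1;\dots;p_r,q_r)\in B_{P_r+Q_r}$ be a Lorenz braid. Index the rows of an $(P_r+Q_r)\times(P_r+Q_r)$ matrix by consecutive blocks of sizes $q_1,\dots,q_r,p_1,\dots,p_r$ (in this order) and its columns by consecutive blocks of sizes $p_1,q_1,p_2,q_2,\dots,p_r,q_r$ (in this order). Then $\beta_{P_r+Q_r}(\sigma)$ is the matrix whose blocks are as follows (with $P_0=0$): <ul> <li>for $1\le i\le r$, in the row block of size $q_i$: the block in column block $p_j$ is $t^{P_{j-1}}A_{q_i,p_j}$ if $j\le i$ and $0$ if $j>i$; the block in column block $q_j$ is $t^{P_i}I_{q_i}$ if $j=i$ and $0$ otherwise;</li> <li>for $1\le i\le r$, in the row block of size $p_i$: the block in column block $p_i$ is $I_{p_i}$, and all other blocks are $0$.</li> </ul> Here $A_{q,p}$ is the $q\times p$ matrix all of whose rows equal $(1-t)(1,t,t^2,\dots,t^{p-1})$. That is, \[ \beta_{P_r+Q_r}(\sigma)=\left(\begin{array}{cc|cc|c|cc} A_{q_1,p_1}&t^{P_1}I_{q_1}&0&0&\cdots&0&0\\ A_{q_2,p_1}&0&t^{P_1}A_{q_2,p_2}&t^{P_2}I_{q_2}&\cdots&0&0\\ \vdots&\vdots&\vdots&\vdots&&\vdots&\vdots\\ A_{q_r,p_1}&0&t^{P_1}A_{q_r,p_2}&0&\cdots&t^{P_{r-1}}A_{q_r,p_r}&t^{P_r}I_{q_r}\\\hline I_{p_1}&0&0&0&\cdots&0&0\\ 0&0&I_{p_2}&0&\cdots&0&0\\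 \vdots&\vdots&\vdots&\vdots&&\vdots&\vdots\\ 0&0&0&0&\cdots&I_{p_r}&0 \end{array}\right). \]
   Context: Braid group $B_n$: generators $\sigma_1,\dots,\sigma_{n-1}$ with the usual braid relations; $\sigma_i$ is the diagram in which the strand from the $i$-th top point to the $(i+1)$-th bottom point passes over the strand from the $(i+1)$-th top point to the $i$-th bottom point, and products correspond to stacking diagrams, the first factor on top. The Burau representation $\beta_n:B_n\to\mathrm{GL}_n(\mathbb{Z}[t,t^{-1}])$ is the homomorphism with $\beta_n(\sigma_j)=I_{j-1}\oplus\begin{pmatrix}1-t&t\\1&0\end{pmatrix}\oplus I_{n-j-1}$. Lorenz braid: given $r\ge1$ and positive integers $p_1,q_1,\dots,p_r,q_r$, set $P_j=p_1+\cdots+p_j$, $Q_j=q_1+\cdots+q_j$. $\mathbb{L}(p_1,q_1;\dots;p_r,q_r)$ is the braid on $P_r+Q_r$ strands defined by: the top row is split into a left part of $Q_r$ points and a right part of $P_r$ points; the bottom row is split, from left to right, into consecutive parts of sizes $p_1,q_1,p_2,q_2,\dots,p_r,q_r$ ($p$-parts and $q$-parts); the strands from the left top part are joined, in order, to the points of the $q$-parts, and the strands from the right top part are joined, in order, to the points of the $p$-parts (straight segments); at each crossing the strand from the left top part passes over the strand from the right top part, so the braid is positive. *)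

(* Defs.v *)
From mathcomp Require Import all_boot all_order all_algebra.
Set Implicit Arguments. Unset Strict Implicit. Unset Printing Implicit Defensive.
Import GRing.Theory.
Local Open Scope ring_scope.

(* Laurent polynomials are replaced by Z[t] = {poly int} (t = 'X): all Burau
   matrices of positive braids have entries in this subring. *)

(* A positive word is a seq of generator indices i (1 <= i <= n-1) for sigma_i;
   the word [:: i1; i2; ...] denotes sigma_i1 * sigma_i2 * ... (first on top). *)

Definition burau_gen (n i : nat) : 'M[{poly int}]_n :=
  \matrix_(a < n, b < n)
    if (a == i.-1 :> nat) && (b == i.-1 :> nat) then 1 - 'X
    else if (a == i.-1 :> nat) && (b == i :> nat) then 'X
    else if (a == i :> nat) && (b == i.-1 :> nat) then 1
    else if ((a == i.-1 :> nat) || (a == i :> nat)) then 0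
    else if (a == b :> nat) then 1 else 0.

Definition burau_word (n : nat) (w : seq nat) : 'M[{poly int}]_n :=
  foldr (fun i M => burau_gen n i *m M) 1%:M w.

Definition valid_word (n : nat) (w : seq nat) : bool :=
  all (fun i => (0 < i)%N && (i < n)%N) w.

(* position (0-indexed) of the strand starting at top position k, after
   following the word from top to bottom; sigma_i swaps positions i-1, i *)
Definition swap_pos (x y z : nat) : nat :=
  if z == x then y else if z == y then x else z.
Definition strand_end (w : seq nat) (k : nat) : nat :=
  foldl (fun pos i => swap_pos i.-1 i pos) k w.

Definition ninv (n : nat) (pi : nat -> nat) : nat :=
  \sum_(a < n) \sum_(b < n) ((a < b)%N && (pi b < pi a)%N).

(* w is a positive braid word whose diagram realizes the positive permutation
   braid of pi: its strands induce pi and every pair of strands crosses at most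
   once (length = number of inversions). *)
Definition realizes (n : nat) (pi : nat -> nat) (w : seq nat) : Prop :=
  valid_word n w /\ (forall k, (k < n)%N -> strand_end w k = pi k)
  /\ size w = ninv n pi.

Definition psum (s : seq nat) (j : nat) : nat := sumn (take j s).
Definition blk (s : seq nat) (x : nat) : nat :=
  find (fun i => (x < psum s i.+1)%N) (iota 0 (size s)).
Definition off (s : seq nat) (x : nat) : nat := x - psum s (blk s x).
Definition ileave (ps qs : seq nat) : seq nat :=
  flatten [seq [:: pq.1; pq.2] | pq <- zip ps qs].

(* top: Q_r left points (0..Q-1), then P_r right points.  Left strand k goes
   to the k-th point of the union of the q-parts; right strand Q+m goes to the
   m-th point of the union of the p-parts (bottom parts p1,q1,...,pr,qr). *)
Definition lorenz_perm (ps qs : seq nat) (k : nat) : nat :=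
  if (k < sumn qs)%N then (psum ps (blk qs k).+1 + k)%N
  else let m := (k - sumn qs)%N in (psum qs (blk ps m) + m)%N.

Definition lorenz_data (ps qs : seq nat) : Prop :=
  (0 < size ps)%N /\ size ps = size qs /\
  all (fun x => 0 < x)%N ps /\ all (fun x => 0 < x)%N qs.

Definition lorenz_entry (ps qs : seq nat) (a b : nat) : {poly int} :=
  let k := blk (ileave ps qs) b in
  let c := off (ileave ps qs) b in
  if (a < sumn qs)%N then
    let i := blk qs a in
    if ~~ odd k then
      (if (k./2 <= i)%N then (1 - 'X) * 'X ^+ (psum ps k./2 + c) else 0)
    else (if (k./2 == i) && (c == off qs a) then 'X ^+ (psum ps i.+1) else 0)
  else
    let m := (a - sumn qs)%N in
    if (k == (blk ps m).*2) && (c == off ps m) then 1 else 0.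

Definition lorenz_mx (ps qs : seq nat) : 'M[{poly int}]_(sumn ps + sumn qs) :=
  \matrix_(a, b) lorenz_entry ps qs a b.

(* Main.v *)
Require Import Defs.
From mathcomp Require Import all_boot all_order all_algebra.
From mathcomp Require Import zify ring.
From Stdlib Require Import FunctionalExtensionality.
Set Implicit Arguments. Unset Strict Implicit. Unset Printing Implicit Defensive.
Import GRing.Theory.


Lemma psum0 s : psum s 0 = 0.
Proof. by rewrite /psum take0. Qed.

Lemma psumS s k : k < size s -> psum s k.+1 = psum s k + nth 0 s k.
Proof.
rewrite /psum; elim: s k => [|x s IH] [|k] //=; first by rewrite take0 /= addn0.
by move=> hk; rewrite IH // addnA.
Qed.

Lemma psum_mono s k k' : k <= k' -> psum s k <= psum s k'.
Proof.
rewrite /psum; elim: s k k' => [|x s IH] [|k] [|k'] //=.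
by rewrite ltnS => /IH; rewrite leq_add2l.
Qed.

Lemma psum_size s : psum s (size s) = sumn s.
Proof. by rewrite /psum take_size. Qed.

Lemma psum_le s k : psum s k <= sumn s.
Proof.
case: (leqP k (size s)) => h; first by rewrite -psum_size psum_mono.
by rewrite /psum take_oversize // ltnW.
Qed.

Lemma blk_spec s x : x < sumn s ->
  [/\ blk s x < size s, psum s (blk s x) <= x & x < psum s (blk s x).+1].
Proof.
move=> hx.
have hs : 0 < size s by case: s hx.
have hhas : has (fun i => x < psum s i.+1) (iota 0 (size s)).
  apply/hasP; exists (size s).-1; first by rewrite mem_iota /=; lia.
  by rewrite prednK // psum_size.
have hlt : blk s x < size s by move: hhas; rewrite has_find size_iota.
split=> //.
- case e: (blk s x) => [|k]; first by rewrite psum0.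
  have := @before_find _ 0 (fun i => x < psum s i.+1) (iota 0 (size s)) k.
  rewrite -/(blk s x) e ltnSn nth_iota; last by rewrite -e ltnW.
  by move=> /(_ isT) /=; rewrite add0n => /negbT; rewrite -leqNgt.
- have := @nth_find _ 0 (fun i => x < psum s i.+1) (iota 0 (size s)) hhas.
  by rewrite -/(blk s x) nth_iota.
Qed.

Lemma blk_uniq s k x : k < size s -> psum s k <= x -> x < psum s k.+1 -> blk s x = k.
Proof.
move=> hk h1 h2.
have hx : x < sumn s by apply: leq_trans h2 (psum_le _ _).
case: (blk_spec hx) => hb b1 b2.
case: (ltngtP (blk s x) k) => // hc.
- have := psum_mono s hc; lia.
- have := @before_find _ 0 (fun i => x < psum s i.+1) (iota 0 (size s)) k.
  by rewrite -/(blk s x) hc nth_iota //= add0n h2 => /(_ isT).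
Qed.

Lemma dec_spec s x : x < sumn s ->
  [/\ blk s x < size s, x = psum s (blk s x) + off s x & off s x < nth 0 s (blk s x)].
Proof.
move=> hx; case: (blk_spec hx) => h1 h2 h3; split=> //; rewrite /off.
- lia.
- move: h3; rewrite psumS //; lia.
Qed.

Lemma dec_uniq s k c : k < size s -> c < nth 0 s k ->
  blk s (psum s k + c) = k /\ off s (psum s k + c) = c.
Proof.
move=> hk hc; have hb : blk s (psum s k + c) = k.
  by apply: blk_uniq => //; rewrite ?leq_addr // psumS //; lia.
by split=> //; rewrite /off hb; lia.
Qed.

Lemma dec_eq s k c k' c' : k < size s -> c < nth 0 s k ->
  k' < size s -> c' < nth 0 s k' ->
  (psum s k + c == psum s k' + c') = (k == k') && (c == c').
Proof.
move=> hk hc hk' hc'; apply/eqP/andP.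
- move=> e; have [e1 e2] := dec_uniq hk hc; have [e3 e4] := dec_uniq hk' hc'.
  by move: e1 e2; rewrite e e3 e4 => <- <-; rewrite !eqxx.
- by case=> /eqP -> /eqP ->.
Qed.

Lemma dec_lt s k c k' c' : k < k' -> k < size s -> c < nth 0 s k ->
  psum s k + c < psum s k' + c'.
Proof.
move=> hkk hk hc; have := psum_mono s hkk; rewrite psumS //; lia.
Qed.

Lemma blk_mono s x y : x <= y -> y < sumn s -> blk s x <= blk s y.
Proof.
move=> hxy hy; have hx : x < sumn s by lia.
case: (blk_spec hx) => a1 a2 a3; case: (blk_spec hy) => b1 b2 b3.
rewrite leqNgt; apply/negP => h.
have := psum_mono s h; lia.
Qed.

Lemma ileave_cons p ps q qs : ileave (p :: ps) (q :: qs) = p :: q :: ileave ps qs.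
Proof. by []. Qed.

Lemma ileave_size ps qs : size ps = size qs -> size (ileave ps qs) = (size ps).*2.
Proof.
elim: ps qs => [|p ps IH] [|q qs] //= [e].
by rewrite /ileave /= -/(ileave ps qs) IH // doubleS.
Qed.

Lemma ileave_nth_even ps qs j : size ps = size qs ->
  nth 0 (ileave ps qs) j.*2 = nth 0 ps j.
Proof.
elim: ps qs j => [|p ps IH] [|q qs] //= j; first by rewrite !nth_nil.
by case=> e; case: j => [|j] //=; rewrite -/(ileave ps qs) IH.
Qed.

Lemma ileave_nth_odd ps qs j : size ps = size qs ->
  nth 0 (ileave ps qs) j.*2.+1 = nth 0 qs j.
Proof.
elim: ps qs j => [|p ps IH] [|q qs] //= j; first by rewrite !nth_nil.
by case=> e; case: j => [|j] //=; rewrite -/(ileave ps qs) IH.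
Qed.

Lemma ileave_psum_even ps qs j : size ps = size qs ->
  psum (ileave ps qs) j.*2 = psum ps j + psum qs j.
Proof.
rewrite /psum.
elim: ps qs j => [|p ps IH] [|q qs] //= j.
case=> e; case: j => [|j] //=; rewrite -/(ileave ps qs) IH //; lia.
Qed.

Lemma ileave_psum_odd ps qs j : size ps = size qs ->
  psum (ileave ps qs) j.*2.+1 = psum ps j.+1 + psum qs j.
Proof.
rewrite /psum.
elim: ps qs j => [|p ps IH] [|q qs] //= j.
case=> e; case: j => [|j] /=; first by rewrite !take0 /=; lia.
  rewrite -/(ileave ps qs) IH //; lia.
Qed.

Lemma ileave_sumn ps qs : size ps = size qs ->
  sumn (ileave ps qs) = sumn ps + sumn qs.
Proof.
move=> e; rewrite -psum_size ileave_size // ileave_psum_even // e !psum_size.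
by rewrite -e psum_size.
Qed.

Lemma swapL i : swap_pos i.-1 i i.-1 = i.
Proof. by rewrite /swap_pos eqxx. Qed.
Lemma swapR i : 0 < i -> swap_pos i.-1 i i = i.-1.
Proof. move=> hi; rewrite /swap_pos eqxx; have -> : (i == i.-1) = false by lia. by []. Qed.
Lemma swap_other i z : z != i.-1 -> z != i -> swap_pos i.-1 i z = z.
Proof. by rewrite /swap_pos => /negbTE -> /negbTE ->. Qed.
Lemma swap_inv x y z : swap_pos x y (swap_pos x y z) = z.
Proof. rewrite /swap_pos. have [->|h1] := eqVneq z x; rewrite ?eqxx; [|have [->|h2] := eqVneq z y; rewrite ?eqxx ?(negbTE h1) ?(negbTE h2)];
 repeat (case: ifP => /eqP ?); congruence. Qed.

Lemma swap_order (i x y : nat) : 0 < i -> ~~ ((y == i.-1) && (x == i)) -> ~~ ((y == i) && (x == i.-1)) ->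
  (swap_pos i.-1 i y < swap_pos i.-1 i x) = (y < x).
Proof.
move=> hi h1 h2.
have [ey|ny] := eqVneq y i.-1; have [ex|nx] := eqVneq x i;
have [ex'|nx'] := eqVneq x i.-1; have [ey'|ny'] := eqVneq y i.
all: try (exfalso; lia).
all: rewrite ?ey ?ex ?ex' ?ey' ?eqxx /= in h1 h2 *; rewrite ?swapL ?swapR ?(swap_other nx' nx) ?(swap_other ny ny') //.
all: lia.


Qed.
Lemma swap_lt n i z : 0 < i -> i < n -> (swap_pos i.-1 i z < n) = (z < n).
Proof.
move=> hi hn; case: (eqVneq z i.-1) => [->|h1]; first by rewrite swapL; lia.
case: (eqVneq z i) => [->|h2]; first by rewrite swapR //; lia.
by rewrite swap_other.
Qed.


Lemma se_rcons w i k : strand_end (rcons w i) k = swap_pos i.-1 i (strand_end w k).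
Proof. by rewrite /strand_end foldl_rcons. Qed.

Lemma valid_rcons n w i : valid_word n (rcons w i) = valid_word n w && ((0 < i) && (i < n)).
Proof. by rewrite /valid_word all_rcons andbC. Qed.

Lemma se_inj w : injective (strand_end w).
Proof.
elim/last_ind: w => [|w i IH] a b; first by [].
rewrite !se_rcons => e; apply: IH.
by rewrite -(swap_inv i.-1 i (strand_end w a)) e swap_inv.
Qed.

Lemma se_lt n w k : valid_word n w -> k < n -> strand_end w k < n.
Proof.
elim/last_ind: w => [|w i IH] //; rewrite valid_rcons => /andP [hw /andP [h1 h2]] hk.
by rewrite se_rcons swap_lt // IH.
Qed.

Lemma se_surj n w x : valid_word n w -> x < n -> exists2 a, a < n & strand_end w a = x.
Proof.
elim/last_ind: w x => [|w i IH] x; first by move=> _ hx; exists x.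
rewrite valid_rcons => /andP [hw /andP [h1 h2]] hx.
have hx' : swap_pos i.-1 i x < n by rewrite swap_lt.
have [a ha e] := IH (swap_pos i.-1 i x) hw hx'.
by exists a => //; rewrite se_rcons e swap_inv.
Qed.

Definition stepgood n w i := forall a b, a < n -> b < n ->
  strand_end w a = i.-1 -> strand_end w b = i -> a < b.

Lemma sum_eq1 n x (F : nat -> nat) : x < n ->
  \sum_(a < n) (if (a : nat) == x then F a else 0) = F x.
Proof.
move=> hx; rewrite (bigD1 (Ordinal hx)) //= eqxx big1 ?addn0 // => j.
by rewrite -val_eqE /= => /negbTE ->.
Qed.

Lemma ninv_pt (s : nat -> nat) i u v a b :
  0 < i -> injective s -> s u = i.-1 -> s v = i -> u != v ->
  ((a < b) && (swap_pos i.-1 i (s b) < swap_pos i.-1 i (s a))) + ((a == v) && (b == u) && (v < u))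
  = ((a < b) && (s b < s a)) + ((a == u) && (b == v) && (u < v)).
Proof.
move=> hi inj su sv huv.
have ex z w0 : (s z == s w0) = (z == w0) by apply/eqP/eqP => [/inj|->].
have l1 : (i < i.-1) = false by lia.
have l2 : (i.-1 < i) = true by lia.
case: (eqVneq a v) => [->|na]; case: (eqVneq b u) => [->|nb].
- rewrite sv su swapL swapR // l1 l2 ?eqxx (eq_sym v u) (negbTE huv) /=.
  by case: (v < u).
- rewrite sv swapR // (eq_sym v u) (negbTE huv) /=.
  have nb' : s b != i.-1 by rewrite -su ex.
  case: (eqVneq b v) => [->|nbv]; first by rewrite ltnn.
  have nb'' : s b != i by rewrite -sv ex.
  rewrite (swap_other nb' nb'').
  by have -> : (s b < i.-1) = (s b < i) by move: nb' nb''; lia.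
- rewrite su swapL /=.
  case: (eqVneq a u) => [->|nau]; first by rewrite ltnn (negbTE huv).
  have na' : s a != i by rewrite -sv ex.
  have na'' : s a != i.-1 by rewrite -su ex.
  rewrite (swap_other na'' na') /=.
  by have -> : (i < s a) = (i.-1 < s a) by move: na' na''; lia.
- case: (eqVneq a u) => [->|nau]; first case: (eqVneq b v) => [->|nbv].
  + by rewrite su sv swapL swapR // l1 l2 /= ?eqxx; case: (u < v).
  + rewrite /= swap_order //.
    * by rewrite -su ex (negbTE nb).
    * by rewrite -sv ex (negbTE nbv).
  + rewrite /= swap_order //.
    * by rewrite -sv ex (negbTE na) andbF.
    * by rewrite -su ex (negbTE nau) andbF.
Qed.

Lemma ninv_step n (s : nat -> nat) i u v :
  0 < i -> u < n -> v < n -> injective s -> s u = i.-1 -> s v = i ->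
  ninv n (fun k => swap_pos i.-1 i (s k)) + (v < u) = ninv n s + (u < v).
Proof.
move=> hi hu hv inj su sv.
have huv : u != v by apply/eqP => e; move: su; rewrite e sv; lia.
have E (c : bool) (x y : nat) : x < n -> y < n ->
    (c : nat) = \sum_(a < n) \sum_(b < n) ((a == x :> nat) && (b == y :> nat) && c : nat).
  move=> hx hy; rewrite -(sum_eq1 (fun _ => (c : nat)) hx); apply: eq_bigr => a _.
  case: eqP => _ /=; last by rewrite big1.
  by rewrite -(sum_eq1 (fun _ => (c : nat)) hy); apply: eq_bigr => b _; case: eqP.
rewrite /ninv (E (v < u) v u) // (E (u < v) u v) // -!big_split.
apply: eq_bigr => a _; rewrite -!big_split; apply: eq_bigr => b _ /=.
exact: ninv_pt.
Qed.


Lemma ninv_ext n f g : (forall k, f k = g k) -> ninv n f = ninv n g.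
Proof. by move=> e; rewrite /ninv; apply: eq_bigr => a _; apply: eq_bigr => b _; rewrite !e. Qed.

Lemma count_good n w : valid_word n w ->
  ninv n (strand_end w) <= size w /\
  (ninv n (strand_end w) = size w ->
     forall j, j < size w -> stepgood n (take j w) (nth 0 w j)).
Proof.
elim/last_ind: w => [|w i IH].
  move=> _; have -> : ninv n (strand_end [::]) = 0.
    rewrite /ninv big1 // => a _; rewrite big1 // => b _ /=.
    by case: (ltngtP a b).
  by [].
rewrite valid_rcons => /andP [hw /andP [h1 h2]].
have [IH1 IH2] := IH hw.
have h2' : i.-1 < n by lia.
have [u hu su] := se_surj hw h2'; have [v hv sv] := se_surj hw h2.
have st := ninv_step h1 hu hv (@se_inj w) su sv.
rewrite (ninv_ext _ (se_rcons w i)) size_rcons.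
case: (ltngtP u v) => huv; last first.
- by move: su; rewrite huv sv; lia.
- by move: st; rewrite huv ltnNge (ltnW huv) /=; lia.
move: st; rewrite huv ltnNge (ltnW huv) /= addn0 => st.
split; first by lia.
move=> e j hj.
have ew : ninv n (strand_end w) = size w by lia.
rewrite -cats1 nth_cat.
case: (ltnP j (size w)) => hjw.
- by rewrite takel_cat ?(ltnW hjw) //; apply: IH2.
- have -> : j = size w by lia.
  rewrite take_size_cat // subnn /= => a b ha hb ea eb.
  have -> : a = u by apply: (@se_inj w); rewrite ea su.
  have -> : b = v by apply: (@se_inj w); rewrite eb sv.
  by [].
Qed.

Lemma inv_grow n w i a b : 0 < i -> stepgood n w i -> a < n -> b < n -> a < b ->
  strand_end w b < strand_end w a ->
  strand_end (rcons w i) b < strand_end (rcons w i) a.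
Proof.
move=> hi sg ha hb hab h; rewrite !se_rcons swap_order //.
- apply/negP => /andP [/eqP e1 /eqP e2]; have := sg b a hb ha e1 e2; lia.
- apply/negP => /andP [/eqP e1 /eqP e2]; move: h; rewrite e1 e2; lia.
Qed.

Lemma inv_chain n W : valid_word n W ->
  (forall j, j < size W -> stepgood n (take j W) (nth 0 W j)) ->
  forall w w', W = w ++ w' -> forall a b, a < n -> b < n -> a < b ->
  strand_end w b < strand_end w a -> strand_end W b < strand_end W a.
Proof.
move=> hv hg w w'; elim: w' w => [|i w' IH] w e a b ha hb hab h.
  by rewrite e cats0.
apply: (IH (rcons w i)) => //; first by rewrite cat_rcons.
have hiW : i \in W by rewrite e mem_cat in_cons eqxx orbT.
have /andP [hi _] := allP hv i hiW.
apply: (@inv_grow n) => //.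
have hs : size w < size W by rewrite e size_cat /=; lia.
by have := hg _ hs; rewrite e nth_cat ltnn subnn take_size_cat.
Qed.


Lemma lp_left ps qs a : a < sumn qs -> lorenz_perm ps qs a = psum ps (blk qs a).+1 + a.
Proof. by rewrite /lorenz_perm => ->. Qed.

Lemma lp_right ps qs m : lorenz_perm ps qs (sumn qs + m) = psum qs (blk ps m) + m.
Proof. by rewrite /lorenz_perm ltnNge leq_addr /= addKn. Qed.

Lemma il_rng_odd ps qs k c : size ps = size qs -> k < size qs -> c < nth 0 qs k ->
  k.*2.+1 < size (ileave ps qs) /\ c < nth 0 (ileave ps qs) k.*2.+1.
Proof. by move=> e hk hc; rewrite ileave_size // ileave_nth_odd // e; split => //; lia. Qed.

Lemma il_rng_even ps qs k c : size ps = size qs -> k < size ps -> c < nth 0 ps k ->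
  k.*2 < size (ileave ps qs) /\ c < nth 0 (ileave ps qs) k.*2.
Proof. by move=> e hk hc; rewrite ileave_size // ileave_nth_even //; split => //; lia. Qed.

Lemma lp_left_dec ps qs a : size ps = size qs -> a < sumn qs ->
  lorenz_perm ps qs a = psum (ileave ps qs) (blk qs a).*2.+1 + off qs a.
Proof.
move=> e ha; have [h1 h2 h3] := dec_spec ha.
rewrite lp_left // ileave_psum_odd //; lia.
Qed.

Lemma lp_right_dec ps qs m : size ps = size qs -> m < sumn ps ->
  lorenz_perm ps qs (sumn qs + m) = psum (ileave ps qs) (blk ps m).*2 + off ps m.
Proof.
move=> e hm; have [h1 h2 h3] := dec_spec hm.
rewrite lp_right // ileave_psum_even //; lia.
Qed.

Lemma lp_inv ps qs a b : a < b -> b < sumn ps + sumn qs ->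
  lorenz_perm ps qs b < lorenz_perm ps qs a -> a < sumn qs <= b.
Proof.
move=> hab hb.
case: (ltnP b (sumn qs)) => hbQ.
  rewrite !lp_left //; try lia.
  have := blk_mono (ltnW hab) hbQ => h.
  have := psum_mono ps (h : (blk qs a).+1 <= (blk qs b).+1); lia.
case: (ltnP a (sumn qs)) => haQ; first by move=> _; apply/andP.
have ea : a = sumn qs + (a - sumn qs) by lia.
have eb : b = sumn qs + (b - sumn qs) by lia.
rewrite ea eb !lp_right.
have := @blk_mono ps (a - sumn qs) (b - sumn qs) ltac:(lia) ltac:(lia) => h.
have := psum_mono qs h; lia.
Qed.

Lemma lp_right_mono ps qs m m' : m < m' -> m' < sumn ps ->
  lorenz_perm ps qs (sumn qs + m) < lorenz_perm ps qs (sumn qs + m').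
Proof.
move=> h1 h2; rewrite !lp_right.
have := @blk_mono ps m m' (ltnW h1) h2 => h.
have := psum_mono qs h; lia.
Qed.

Lemma lp_sep ps qs a m : size ps = size qs -> a < sumn qs -> m < sumn ps ->
  (lorenz_perm ps qs (sumn qs + m) < lorenz_perm ps qs a) = (m < psum ps (blk qs a).+1).
Proof.
move=> e ha hm.
have [i1 i2 i3] := dec_spec ha; have [j1 j2 j3] := dec_spec hm.
have [o1 o2] := il_rng_odd e i1 i3.
have [e1 e2] := il_rng_even e j1 j3.
rewrite lp_right_dec // lp_left_dec //.
case: (leqP (blk ps m) (blk qs a)) => h.
- have -> : psum (ileave ps qs) (blk ps m).*2 + off ps m <
            psum (ileave ps qs) (blk qs a).*2.+1 + off qs a.
    by apply: dec_lt => //; rewrite ltnS leq_double.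
  have := psum_mono ps (h : (blk ps m).+1 <= (blk qs a).+1).
  rewrite psumS //; lia.
- have : psum (ileave ps qs) (blk qs a).*2.+1 + off qs a <
         psum (ileave ps qs) (blk ps m).*2 + off ps m.
    by apply: dec_lt => //; lia.
  have := psum_mono ps (h : (blk qs a).+1 <= blk ps m); lia.
Qed.

Lemma b_dec_eq s b k c : b < sumn s -> k < size s -> c < nth 0 s k ->
  (b == psum s k + c) = (blk s b == k) && (off s b == c).
Proof.
move=> hb hk hc; have [h1 h2 h3] := dec_spec hb.
by rewrite {1}h2 dec_eq.
Qed.

Local Open Scope ring_scope.


Lemma sumr_eq1 (R : nmodType) n x (G : 'I_n -> R) (hx : (x < n)%N) :
  \sum_(j < n) (if (j : nat) == x then G j else 0) = G (Ordinal hx).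
Proof.
rewrite (bigD1 (Ordinal hx)) //= eqxx big1 ?addr0 // => j.
by rewrite -val_eqE /= => /negbTE ->.
Qed.

Lemma mul_gen n (M : 'M[{poly int}]_n) i (F : nat -> {poly int}) (a b : 'I_n) :
  (0 < i)%N -> (i < n)%N -> (forall j : 'I_n, M a j = F j) ->
  (M *m burau_gen n i) a b =
  if (b == i.-1 :> nat) then F i.-1 * (1 - 'X) + F i
  else if (b == i :> nat) then F i.-1 * 'X else F b.
Proof.
move=> hi hn hF; rewrite mxE.
have hn1 : (i.-1 < n)%N by lia.
have ne : (i.-1 == i) = false by lia.
have ne' : (i == i.-1) = false by lia.
under eq_bigr => j _ do rewrite hF mxE.
case: (eqVneq (b : nat) i.-1) => [eb|nb].
  rewrite eb ne.
  transitivity (\sum_(j < n) ((if (j : nat) == i.-1 then F j * (1 - 'X) else 0)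
                            + (if (j : nat) == i then F j else 0))).
    apply: eq_bigr => j _.
    have [ej|n1] := eqVneq (j : nat) i.-1; have [ej'|n2] := eqVneq (j : nat) i;
    try (exfalso; lia); rewrite ?ej ?ej' ?eqxx ?ne ?ne' ?(negbTE n1) ?(negbTE n2) /=;
    by rewrite ?mulr0 ?mulr1 ?addr0 ?add0r.
  by rewrite big_split /= (sumr_eq1 _ hn1) (sumr_eq1 _ hn).
case: (eqVneq (b : nat) i) => [eb|nb'].
  rewrite eb ?ne'.
  transitivity (\sum_(j < n) (if (j : nat) == i.-1 then F j * 'X else 0)).
    apply: eq_bigr => j _.
    have [ej|n1] := eqVneq (j : nat) i.-1; have [ej'|n2] := eqVneq (j : nat) i;
    try (exfalso; lia); rewrite ?ej ?ej' ?eqxx ?ne ?ne' ?(negbTE n1) ?(negbTE n2) /=;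
    by rewrite ?mulr0 ?mulr1 ?addr0 ?add0r.
  by rewrite (sumr_eq1 _ hn1).
transitivity (\sum_(j < n) (if (j : nat) == b then F j else 0)).
  apply: eq_bigr => j _.
  have [ej|n1] := eqVneq (j : nat) i.-1; have [ej'|n2] := eqVneq (j : nat) i;
  try (exfalso; lia); rewrite ?ej ?ej' ?eqxx ?ne ?ne' ?(negbTE n1) ?(negbTE n2) /=.
  - by rewrite eq_sym (negbTE nb) mulr0.
  - by rewrite eq_sym (negbTE nb') mulr0.
  - by case: eqP; rewrite ?mulr1 ?mulr0.
by rewrite (sumr_eq1 _ (ltn_ord b)).
Qed.


Definition rowL (s : nat -> nat) (Q c a b : nat) : {poly int} :=
  \sum_(m < c) (if b == s (Q + m)%N then (1 - 'X) * 'X ^+ m else 0)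
  + (if b == s a then 'X ^+ c else 0).

Definition Inv n Q (s : nat -> nat) (M : 'M[{poly int}]_n) :=
  forall a : 'I_n,
  ((Q <= a)%N -> forall b : 'I_n, M a b = if (b == s a :> nat) then 1 else 0) /\
  ((a < Q)%N -> exists c, [/\ (c <= n - Q)%N,
      (forall m, (m < n - Q)%N -> (s (Q + m) < s a)%N = (m < c)%N) &
      forall b : 'I_n, M a b = rowL s Q c a b]).

Lemma eq_swap i b x : (b == swap_pos i.-1 i x) = (swap_pos i.-1 i b == x).
Proof.
apply/eqP/eqP => [->|<-]; by rewrite swap_inv.
Qed.

Lemma mul_gen0 n (M : 'M[{poly int}]_n) i (F : nat -> {poly int}) (a b : 'I_n) :
  (0 < i)%N -> (i < n)%N -> (forall j : 'I_n, M a j = F j) -> F i.-1 = 0 ->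
  (M *m burau_gen n i) a b = F (swap_pos i.-1 i b).
Proof.
move=> hi hn hF h0; rewrite (mul_gen b hi hn hF) h0 mul0r add0r.
case: (eqVneq (b : nat) i.-1) => [->|n1]; first by rewrite swapL.
case: (eqVneq (b : nat) i) => [->|n2]; first by rewrite swapR // mul0r.
by rewrite swap_other.
Qed.

Lemma inv_step n Q s (M : 'M[{poly int}]_n) i u v :
  (Q <= n)%N -> (0 < i)%N -> (i < n)%N -> injective s ->
  (u < n)%N -> (v < n)%N -> s u = i.-1 -> s v = i -> (u < Q)%N -> (Q <= v)%N ->
  (forall m m', (m < m')%N -> (m' < n - Q)%N -> (s (Q + m) < s (Q + m'))%N) ->
  @Inv n Q s M -> @Inv n Q (fun k => swap_pos i.-1 i (s k)) (M *m burau_gen n i).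
Proof.
move=> hQ hi hn inj hu hv su sv huQ hvQ mono I a.
have ex z w0 : (s z == s w0) = (z == w0) by apply/eqP/eqP => [/inj|->].
have [Ir Il] := I a.
split.
- move=> ha b.
  have na : s a != i.-1 by rewrite -su ex; apply/eqP => e; move: ha; rewrite e; lia.
  rewrite (@mul_gen0 _ _ _ (fun j : nat => if j == s a then 1 else 0) _ b hi hn (Ir ha)) /=; last by rewrite eq_sym (negbTE na).
  by rewrite eq_swap.
- move=> ha; have [c [hc sep row]] := Il ha.
  case: (eqVneq (a : nat) u) => [eau|nau]; last first.
    have na : s a != i.-1 by rewrite -su ex.
    have na' : s a != i by rewrite -sv ex; apply/eqP => e; move: ha; rewrite e; lia.
    exists c; split => //.
      move=> m hm; rewrite -sep // swap_order //.
        by rewrite (negbTE na') andbF.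
      by rewrite (negbTE na) andbF.
    move=> b; rewrite (@mul_gen0 _ _ _ (rowL s Q c a) _ b hi hn row).
      rewrite /rowL eq_swap; congr (_ + _); apply: eq_bigr => m _.
      by rewrite eq_swap.
    rewrite /rowL big1 ?add0r; first by rewrite eq_sym (negbTE na).
    move=> m _; rewrite -su ex.
    by have -> : (u == Q + m)%N = false by lia.
  rewrite eau in sep row *.
  have hm0 : (v - Q < n - Q)%N by lia.
  have ev : v = (Q + (v - Q))%N by lia.
  have hcv : (v - Q = c)%N.
    have := sep _ hm0; rewrite -ev sv su.
    have -> : (i < i.-1)%N = false by lia.
    move=> /esym /negbT; rewrite -leqNgt => h1.
    case: (ltngtP c (v - Q)) => // h2; [exfalso|lia].
    have hc' : (c < n - Q)%N by lia.
    have := mono _ _ h2 hm0; rewrite -ev sv => h3.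
    have := sep _ hc'; rewrite ltnn su => /negbT; rewrite -leqNgt => h4.
    have : s (Q + c)%N != i.-1 by rewrite -su ex; apply/eqP => e; lia.
    lia.
  have hcn : (c < n - Q)%N by lia.
  have ev' : v = (Q + c)%N by lia.
  (* positions of the already-crossed right strands *)
  have small m : (m < c)%N -> (s (Q + m) < i.-1)%N.
    by move=> hm; rewrite -su sep //; lia.
  exists c.+1; split => //.
  - move=> m hm /=; rewrite su swapL.
    case: (eqVneq m c) => [->|nmc]; first by rewrite -ev' sv swapR //; lia.
    have n1 : s (Q + m)%N != i.-1 by rewrite -su ex; apply/eqP => e; lia.
    have n2 : s (Q + m)%N != i by rewrite -sv ex; apply/eqP => e; lia.
    rewrite swap_other //.
    have := sep m hm; rewrite su => h; move: n1 n2 nmc h; lia.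
  - move=> b; rewrite (@mul_gen _ _ _ (rowL s Q c u) _ b hi hn row).
    have z1 : \sum_(m < c) (if i.-1 == s (Q + m)%N then (1 - 'X) * 'X ^+ m else 0) = 0 :> {poly int}.
      by rewrite big1 // => m _; have := small m (ltn_ord m); case: eqP => // ->; lia.
    have z2 : \sum_(m < c) (if i == s (Q + m)%N then (1 - 'X) * 'X ^+ m else 0) = 0 :> {poly int}.
      by rewrite big1 // => m _; have := small m (ltn_ord m); case: eqP => // ->; lia.
    have ne : (i.-1 == i) = false by lia.
    have ne' : (i == i.-1) = false by lia.
    have es : \sum_(m < c) (if (b : nat) == swap_pos i.-1 i (s (Q + m)%N) then (1 - 'X) * 'X ^+ m else 0)
            = \sum_(m < c) (if (b : nat) == s (Q + m)%N then (1 - 'X) * 'X ^+ m else 0) :> {poly int}.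
      apply: eq_bigr => m _; rewrite swap_other //.
        by have := small m (ltn_ord m); apply: contraTneq => ->; lia.
      by have := small m (ltn_ord m); apply: contraTneq => ->; lia.
    rewrite /rowL big_ord_recr /= es -ev' sv swapR // su swapL.
    case: (eqVneq (b : nat) i.-1) => [eb|n1].
      rewrite ?eb z1 z2 eqxx ?ne ?ne'; ring.
    case: (eqVneq (b : nat) i) => [eb|n2].
      rewrite ?eb z1 z2 ?ne' eqxx ?ne exprSr; ring.
    by rewrite !addr0.
Qed.


Lemma sumr_cond (R : nmodType) c x (G : nat -> R) :
  \sum_(m < c) (if (m : nat) == x then G m else 0) = if (x < c)%N then G x else 0.
Proof.
case: ltnP => h; first by rewrite (sumr_eq1 (fun m : 'I_c => G m) h).
by rewrite big1 // => m _; have := ltn_ord m; case: eqP => // ->; lia.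
Qed.

Lemma entry_left ps qs a b : size ps = size qs -> (a < sumn qs)%N ->
  (b < sumn ps + sumn qs)%N ->
  rowL (lorenz_perm ps qs) (sumn qs) (psum ps (blk qs a).+1) a b = lorenz_entry ps qs a b.
Proof.
move=> e ha hb.
rewrite /lorenz_entry ha /=.
have hb' : (b < sumn (ileave ps qs))%N by rewrite ileave_sumn.
have [k1 eb c1] := dec_spec hb'.
have [i1 i2 i3] := dec_spec ha.
have [o1 o2] := il_rng_odd e i1 i3.
have hla := lp_left_dec e ha.
move: k1 c1; rewrite ileave_size //.
set k := blk (ileave ps qs) b; set c := off (ileave ps qs) b; set i := blk qs a.
set j := k./2 => k1 c1.
have hc0 : (psum ps i.+1 <= sumn ps)%N by apply: psum_le.
rewrite /rowL.
case: (boolP (odd k)) => hk /=.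
- have ek : k = j.*2.+1 by have := odd_double_half k; rewrite hk /=; lia.
  have hj : (j < size qs)%N by lia.
  move: c1; rewrite ek ileave_nth_odd // => hc.
  rewrite big1 ?add0r.
    rewrite hla b_dec_eq //.
    by have -> : (k == i.*2.+1) = (j == i) by lia.
  move=> m _.
  have hm : (m < sumn ps)%N by have := ltn_ord m; lia.
  have [m1 m2 m3] := dec_spec hm.
  have [p1 p2] := il_rng_even e m1 m3.
  rewrite lp_right_dec // b_dec_eq //.
  by have -> : (k == (blk ps m).*2) = false by lia.
- have ek : k = j.*2 by have := odd_double_half k; rewrite (negbTE hk) /=; lia.
  have hj : (j < size ps)%N by lia.
  move: c1; rewrite ek ileave_nth_even // => hc.
  have -> : (b == lorenz_perm ps qs a) = false.
    by rewrite hla b_dec_eq //; have -> : (k == i.*2.+1) = false by lia.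
  rewrite addr0.
  transitivity (\sum_(m < psum ps i.+1)
      (if (m : nat) == (psum ps j + c)%N then (1 - 'X) * 'X ^+ m else 0) : {poly int}).
    apply: eq_bigr => m _.
    have hm : (m < sumn ps)%N by have := ltn_ord m; lia.
    have [m1 m2 m3] := dec_spec hm.
    have [p1 p2] := il_rng_even e m1 m3.
    rewrite lp_right_dec // b_dec_eq // (b_dec_eq hm) //.
    rewrite -/k -/c; have -> : (k == (blk ps m).*2) = (blk ps m == j) by lia.
    by rewrite (eq_sym c).
  rewrite (sumr_cond _ _ (fun m => (1 - 'X) * 'X ^+ m)).
  have -> : (psum ps j + c < psum ps i.+1)%N = (j <= i)%N.
    case: (leqP j i) => h.
      have := psum_mono ps (h : (j.+1 <= i.+1)%N); rewrite psumS //; lia.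
    have := psum_mono ps (h : (i.+1 <= j)%N); lia.
  by [].
Qed.

Lemma entry_right ps qs a b : size ps = size qs -> (sumn qs <= a)%N ->
  (a < sumn ps + sumn qs)%N -> (b < sumn ps + sumn qs)%N ->
  (if b == lorenz_perm ps qs a then 1 else 0) = lorenz_entry ps qs a b.
Proof.
move=> e ha ha' hb.
rewrite /lorenz_entry ltnNge ha /=.
have hb' : (b < sumn (ileave ps qs))%N by rewrite ileave_sumn.
have hm : (a - sumn qs < sumn ps)%N by lia.
have [m1 m2 m3] := dec_spec hm.
have [p1 p2] := il_rng_even e m1 m3.
have ea : a = (sumn qs + (a - sumn qs))%N by lia.
by rewrite {1}ea lp_right_dec // b_dec_eq.
Qed.


Lemma bw_rcons n w i : burau_word n (rcons w i) = burau_word n w *m burau_gen n i.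
Proof.
rewrite /burau_word; elim: w => [|j w IH] /=; first by rewrite mulmx1 mul1mx.
by rewrite IH mulmxA.
Qed.

Lemma ninv_lt n f g : (forall k, (k < n)%N -> f k = g k) -> ninv n f = ninv n g.
Proof.
move=> e; rewrite /ninv; apply: eq_bigr => a _; apply: eq_bigr => b _.
by rewrite !e.
Qed.

Theorem theorem6p10 (ps qs : seq nat) (w : seq nat) :
  lorenz_data ps qs ->
  realizes (sumn ps + sumn qs) (lorenz_perm ps qs) w ->
  burau_word (sumn ps + sumn qs) w = lorenz_mx ps qs.
Proof.
move=> [_ [e _]] [hv [hend hsz]].
have hgood : forall j, (j < size w)%N ->
    stepgood (sumn ps + sumn qs) (take j w) (nth 0 w j).
  have [_ c2] := count_good hv; apply: c2.
  by rewrite hsz; apply: ninv_lt.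
have hinv : forall w1 w2, w = w1 ++ w2 ->
    @Inv (sumn ps + sumn qs) (sumn qs) (strand_end w1) (burau_word _ w1).
  elim/last_ind => [|w1 i IH] w2 ew.
  - move=> a; split.
      by move=> _ b; rewrite /burau_word /= mxE -val_eqE eq_sym; case: (_ == _).
    move=> ha; exists 0%N; split => //.
      by move=> m _ /=; lia.
    by move=> b; rewrite /rowL /burau_word /= big_ord0 add0r mxE expr0 -val_eqE eq_sym; case: (_ == _).
  have ew' : w = w1 ++ i :: w2 by rewrite ew cat_rcons.
  have IH' := IH _ ew'.
  have hv1 : valid_word (sumn ps + sumn qs) w1.
    by move: hv; rewrite ew' /valid_word all_cat => /andP [].
  have /andP [hi hin] : (0 < i)%N && (i < sumn ps + sumn qs)%N.
    by move: hv => /allP; apply; rewrite ew' mem_cat in_cons eqxx orbT.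
  have hin1 : (i.-1 < sumn ps + sumn qs)%N by lia.
  have [u hu su] := se_surj hv1 hin1; have [v hv' sv] := se_surj hv1 hin.
  have sg : stepgood (sumn ps + sumn qs) w1 i.
    have hs : (size w1 < size w)%N by rewrite ew' size_cat /=; lia.
    by have := hgood _ hs; rewrite ew' nth_cat ltnn subnn take_size_cat.
  have huv : (u < v)%N := sg u v hu hv' su sv.
  have hpi : (lorenz_perm ps qs v < lorenz_perm ps qs u)%N.
    rewrite -!hend //.
    apply: (inv_chain hv hgood (w := rcons w1 i) (w' := w2)) => //.
    by rewrite !se_rcons su sv swapL swapR //; lia.
  have /andP [huQ hvQ] := lp_inv huv hv' hpi.
  rewrite bw_rcons.
  have -> : strand_end (rcons w1 i) = (fun k => swap_pos i.-1 i (strand_end w1 k)).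
    by apply: functional_extensionality => k; exact: se_rcons.
  apply: (inv_step (u := u) (v := v)) => //.
  - by rewrite leq_addl.
  - exact: se_inj.
  - move=> m m' hmm hm'.
    have hne : strand_end w1 (sumn qs + m) != strand_end w1 (sumn qs + m').
      by apply/eqP => /se_inj; lia.
    case: (ltngtP (strand_end w1 (sumn qs + m)) (strand_end w1 (sumn qs + m'))) => // h.
      have := inv_chain hv hgood ew' (a := (sumn qs + m)%N) (b := (sumn qs + m')%N).
      move=> /(_ ltac:(lia) ltac:(lia) ltac:(lia) h).
      rewrite !hend; try lia.
      have := @lp_right_mono ps qs m m' hmm ltac:(lia); lia.
    by move: hne; rewrite h eqxx.
have I := hinv w [::] (esym (cats0 w)).
apply/matrixP => a b; rewrite mxE.
have [Ir Il] := I a.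
case: (ltnP a (sumn qs)) => ha.
- have [c [hc sep row]] := Il ha.
  rewrite row.
  have hc0 : (psum ps (blk qs a).+1 <= sumn ps)%N by apply: psum_le.
  have sep' m : (m < sumn ps)%N -> (m < c)%N = (m < psum ps (blk qs a).+1)%N.
    move=> hm; rewrite -sep; last by lia.
    by rewrite !hend ?lp_sep //; lia.
  have ec : c = psum ps (blk qs a).+1.
    case: (ltngtP c (psum ps (blk qs a).+1)) => // h.
    + by have := sep' c ltac:(lia); rewrite ltnn h.
    + by have := sep' (psum ps (blk qs a).+1) ltac:(lia); rewrite ltnn h.
  rewrite -(entry_left e ha (ltn_ord b)) -ec /rowL.
  congr (_ + _).
    apply: eq_bigr => m _; rewrite hend //.
    by have := ltn_ord m; lia.
  by rewrite hend.
- by rewrite (Ir ha) hend // entry_right.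
Qed.
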